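(* Let $\Lambda$ be a stable net of quadrics in $\mathbb{P}^5$, given by $F(\lambda,x)=x^T(\lambda_1A_1+\lambda_2A_2+\lambda_3A_3)x$ with symmetric $6\times6$ matrices $A_i$, and let $B=\{x\in\mathbb{P}^5: F(\lambda,x)=0\text{ for all }\lambda\}$ be its base locus. Then every singular point $x$ of $B$ is tame, i.e. the three linear forms $y\mapsto x^TA_iy$ ($i=1,2,3$) span a $2$-dimensional vector space.
   Context: A net of quadrics in $\mathbb{P}^5$ is a $3$-dimensional subspace of the space $W$ of quadratic forms in $6$ variables, viewed as a point of $Gr(3,W)\subset\mathbb{P}(\bigwedge^3W)$; stability is GIT stability for the natural $SL(6)$-action (via the Plücker embedding). *)

(* Defs.v *)
From mathcomp Require Import all_boot all_algebra.
From mathcomp Require Import reals.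
From mathcomp Require Import complex.
From mathcomp Require mpoly.

Set Implicit Arguments.
Unset Strict Implicit.
Unset Printing Implicit Defensive.

Import GRing.Theory.
Local Open Scope ring_scope.

Section NetsOfQuadrics.
Variable R : realType.
Local Notation C := (R[i]).

Definition symmetric_mx (M : 'M[C]_6) : Prop := M^T = M.

Definition lin_indep3 (A : 'I_3 -> 'M[C]_6) : Prop :=
  forall c : 'I_3 -> C, \sum_(i < 3) c i *: A i = 0 -> forall i, c i = 0.

Definition is_net (A : 'I_3 -> 'M[C]_6) : Prop :=
  (forall i, symmetric_mx (A i)) /\ lin_indep3 A.

(* Natural action of GL(6) (restricted to SL(6)) on quadratic forms:
   the form x |-> x^T M x is sent to x |-> (g x)^T M (g x).  (Using g or g^-1
   gives the same orbits and stabilizers-up-to-inversion.) *)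
Definition act (g : 'M[C]_6) (A : 'I_3 -> 'M[C]_6) : 'I_3 -> 'M[C]_6 :=
  fun i => g^T *m A i *m g.

(* We view W inside 'M_6 (a GL-stable subspace), so the
   Plücker point of the net spanned by A 0, A 1, A 2 is the decomposable
   alternating 3-tensor  A 0 /\ A 1 /\ A 2  in  /\^3 W  (a subspace of
   (M_6)^{(x)3}). *)
Definition pl_index := {ffun 'I_3 -> 'I_6 * 'I_6}.
Definition pl_dim := #|{: pl_index}|.

Definition plucker (A : 'I_3 -> 'M[C]_6) : 'I_pl_dim -> C :=
  fun k => let s := enum_val k in
    \det (\matrix_(i < 3, j < 3) A i (s j).1 (s j).2).

Definition zariski_closed (n : nat) (S : ('I_n -> C) -> Prop) : Prop :=
  exists P : mpoly.mpoly n C -> Prop,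
    forall v, S v <-> (forall p, P p -> mpoly.meval v p = 0).

Definition pl_orbit (A : 'I_3 -> 'M[C]_6) : ('I_pl_dim -> C) -> Prop :=
  fun v => exists g : 'M[C]_6, \det g = 1 /\ v = plucker (act g A).

Definition finite_stabilizer (A : 'I_3 -> 'M[C]_6) : Prop :=
  exists s : seq 'M[C]_6, forall g : 'M[C]_6,
    \det g = 1 -> plucker (act g A) = plucker A -> g \in s.

(* GIT stability (Mumford): the point of P(/\^3 W) is stable iff the
   SL(6)-orbit of a (any) nonzero lift is closed in /\^3 W and its
   stabilizer is finite. *)
Definition stable_net (A : 'I_3 -> 'M[C]_6) : Prop :=
  is_net A /\ zariski_closed (pl_orbit A) /\ finite_stabilizer A.

(* Points of P^5 are represented by nonzero column vectors. *)
Definition in_base_locus (A : 'I_3 -> 'M[C]_6) (x : 'cV[C]_6) : Prop :=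
  x != 0 /\ forall i, (x^T *m A i *m x) 0 0 = 0.

(* The 3 x 6 matrix whose rows are the linear forms  y |-> x^T A_i y;
   up to the factor 2 these are the gradients of the quadrics at x. *)
Definition lin_forms (A : 'I_3 -> 'M[C]_6) (x : 'cV[C]_6) : 'M[C]_(3, 6) :=
  \matrix_(i < 3, j < 6) (x^T *m A i) 0 j.

(* x is a singular point of the base locus B (complete intersection of the
   three quadrics): the Jacobian has rank < 3 at x. *)
Definition singular_point (A : 'I_3 -> 'M[C]_6) (x : 'cV[C]_6) : Prop :=
  in_base_locus A x /\ (\rank (lin_forms A x) < 3)%N.

Definition tame (A : 'I_3 -> 'M[C]_6) (x : 'cV[C]_6) : Prop :=
  \rank (lin_forms A x) = 2%N.

End NetsOfQuadrics.

(* Main.v *)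
Require Import Defs.
From mathcomp Require Import all_boot all_algebra.
From mathcomp Require Import reals complex.
From mathcomp Require Import fingroup perm.
From mathcomp Require Import ring.
From mathcomp Require mpoly.
From Stdlib Require Import FunctionalExtensionality.
Set Implicit Arguments.
Unset Strict Implicit.
Unset Printing Implicit Defensive.
Import GRing.Theory Num.Theory.
Local Open Scope ring_scope.
Lemma det3 (R : comRingType) (M : 'M[R]_3) : \det M =
  M 0 0 * (M 1 1 * M 2 2 - M 1 2 * M 2 1) - M 0 1 * (M 1 0 * M 2 2 - M 1 2 * M 2 0)
  + M 0 2 * (M 1 0 * M 2 1 - M 1 1 * M 2 0).
Proof.
pose f (i j : nat) := M (inord i) (inord j).
have H : forall i j : 'I_3, M i j = f i j by move=> i j; rewrite /f !inord_val.
rewrite (expand_det_row _ 0) !big_ord_recr big_ord0 /= /cofactor.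
rewrite !(expand_det_row _ 0) !big_ord_recr !big_ord0 /= /cofactor !det_mx11 !mxE /=.
rewrite !H /= /bump /=.
rewrite (_ : (1 %% 3 = 1)%N) // (_ : ((1 + 1) %% 3 = 2)%N) //.
rewrite !expr0 !expr1 /=.
have -> : (-1) ^+ (0 + 2) = 1 :> R by rewrite add0n expr2 mulrNN mulr1.
ring.
Qed.
Lemma det_rank1 (R : comNzRingType) n (u : 'cV[R]_n) (v : 'rV[R]_n) :
  \det (1%:M + u *m v) = 1 + (v *m u) 0 0.
Proof.
have E : block_mx 1%:M (-u) 0 1%:M *m block_mx (1%:M + u *m v) 0 v 1%:M
       = block_mx 1%:M 0 v 1%:M *m block_mx 1%:M (-u) 0 (1%:M + v *m u).
  rewrite !mulmx_block; congr block_mx;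
   rewrite ?mul1mx ?mulmx1 ?mul0mx ?mulmx0 ?addr0 ?add0r ?mulNmx ?mulmxN //.
  - by rewrite addrK.
  - by rewrite addrCA addNr addr0.
have := congr1 determinant E.
rewrite !det_mulmx det_ublock det_lblock det_lblock det_ublock !det1 !mul1r !mulr1.
by move=> ->; rewrite det_mx11 !mxE mulr1n.
Qed.
Lemma det_expand (R : comNzRingType) n (T : finType) (X : 'I_n -> T -> R) (Y : T -> 'I_n -> R) :
  \det (\matrix_(i, j) \sum_k X i k * Y k j) =
  \sum_(f : {ffun 'I_n -> T}) (\prod_j Y (f j) j) * \det (\matrix_(i, j) X i (f j)).
Proof.
rewrite /determinant.
have E1 : forall s : 'S_n, \prod_i (\matrix_(i, j) \sum_k X i k * Y k j) i (s i)
   = \sum_(g : {ffun 'I_n -> T}) \prod_i (X i (g i) * Y (g i) (s i)).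
  move=> s; rewrite (eq_bigr (fun i => \sum_k X i k * Y k (s i))); last by move=> i _; rewrite mxE.
  by rewrite bigA_distr_bigA.
under eq_bigr => s _ do rewrite E1.
under [RHS]eq_bigr => f _ do rewrite big_distrr.
rewrite [RHS]exchange_big /=; apply: eq_bigr => s _.
rewrite big_distrr /=.
rewrite (reindex (fun f : {ffun 'I_n -> T} => [ffun i => f (s i)])) /=; last first.
  exists (fun f : {ffun 'I_n -> T} => [ffun i => f (s^-1 i)%g]) => f _; apply/ffunP => i;
  by rewrite !ffunE ?permK ?permKV.
apply: eq_bigr => f _.
rewrite big_split /=.
rewrite [X in _ * (X * _) = _](eq_bigr (fun i => (\matrix_(i0, j) X i0 (f j)) i (s i))); last by move=> i _; rewrite !mxE ffunE.
rewrite [X in _ * (_ * X) = _](eq_bigr (fun i => Y (f (s i)) (s i))); last by move=> i _; rewrite ffunE.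
rewrite [X in _ = X * _](reindex_inj (@perm_inj _ s)) /=.
by rewrite [RHS]mulrC mulrA.
Qed.
Section S.
Variable R : realType.
Local Notation C := (R[i]).
Lemma t1 (a b : C) : a * b + 1 = b * a + 1. ring. Qed.
Lemma plucker_lin (g : 'M[C]_6) (B : 'I_3 -> 'M[C]_6) (k : 'I_pl_dim) :
  plucker (act g B) k = \sum_(f : pl_index)
    (\prod_j (g (f j).1 (enum_val k j).1 * g (f j).2 (enum_val k j).2)) * plucker B (enum_rank f).
Proof.
rewrite {1}/plucker; set s := enum_val k.
have E : \matrix_(i, j) act g B i (s j).1 (s j).2 = \matrix_(i, j)
   \sum_(kk : 'I_6 * 'I_6) B i kk.1 kk.2 * (g kk.1 (s j).1 * g kk.2 (s j).2).
  apply/matrixP => i j; rewrite !mxE /act -(pair_bigA _ (fun a b => B i a b * (g a (s j).1 * g b (s j).2))) /=.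
  rewrite exchange_big /=; apply: eq_bigr => b _; rewrite mxE big_distrl /=.
  by apply: eq_bigr => a _; rewrite !mxE [g a _ * _]mulrC -mulrA.
rewrite E (det_expand (fun i (kk : 'I_6 * 'I_6) => B i kk.1 kk.2)) /=.
by apply: eq_bigr => f _; rewrite /plucker enum_rankK.
Qed.

Definition Mc (x : 'cV[C]_6) (phi : 'rV[C]_6) (c : C) : 'M[C]_6 := 1%:M + c *: (x *m phi).
Lemma act_Mc (A : 'I_3 -> 'M[C]_6) x phi c i p q :
  symmetric_mx (A i) -> (x^T *m A i *m x) 0 0 = 0 ->
  act (Mc x phi c) A i p q = A i p q + c * ((x^T *m A i) 0 q * phi 0 p + (x^T *m A i) 0 p * phi 0 q).
Proof.
move=> sym z.
have Z : x^T *m A i *m x = 0 by apply/matrixP => a b; rewrite !ord1 z mxE.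
have E : (Mc x phi c)^T *m A i *m Mc x phi c =
   A i + c *: (phi^T *m (x^T *m A i)) + c *: ((A i *m x) *m phi).
  rewrite /Mc [(_ + _)^T]raddfD /= trmx1 [(_ *: _)^T]linearZ /= trmx_mul mulmxDl mul1mx !mulmxDr !mulmx1.
  rewrite -!scalemxAr -!scalemxAl !mulmxA !mulmxDl -!scalemxAl.
  have -> : phi^T *m x^T *m A i *m x *m phi = 0.
    by rewrite -(mulmxA phi^T) -(mulmxA phi^T) Z mulmx0 mul0mx.
  by rewrite !scaler0 addr0.
have S : forall a b, A i a b = A i b a by move=> a b; rewrite -{1}sym mxE.
rewrite /act E !mxE !big_ord1 !mxE.
have T : \sum_j A i p j * x j 0 = \sum_j x j 0 * A i j p.
  by apply: eq_bigr => j _; rewrite S mulrC.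
have T2 : forall r, \sum_j x^T 0 j * A i j r = \sum_j x j 0 * A i j r.
  by move=> r; apply: eq_bigr => j _; rewrite mxE.
rewrite !T2 T; ring.
Qed.

Lemma rank1_fact (L : 'M[C]_(3,6)) : (\rank L <= 1)%N ->
  exists u : 'I_3 -> C, exists l : 'I_6 -> C, forall i q, L i q = u i * l q.
Proof.
move=> Hr; exists (fun i => col_ebase L i 0), (fun q => ((pid_mx (\rank L) : 'M_(3,6)) *m row_ebase L) 0 q).
move=> i q; rewrite -{1}(mulmx_ebase L) -mulmxA mxE (bigD1 0) //= big1 ?addr0 // => k nk0.
rewrite mxE big1 ?mulr0 // => l _; rewrite mxE.
have -> : (k < \rank L)%N = false.
  apply/negbTE; rewrite -leqNgt; apply: leq_trans Hr _.
  by case: k nk0 => [[|k]] //.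
by rewrite andbF mul0r.
Qed.

Lemma det_affine (F : comNzRingType) (a : 'I_3 -> 'I_3 -> F) (u s : 'I_3 -> F) (c : F) :
  \det (\matrix_(i,j) (a i j + c * (u i * s j))) = \det (\matrix_(i,j) a i j) +
   c * (\det (\matrix_(i,j) (a i j + 1 * (u i * s j))) - \det (\matrix_(i,j) a i j)).
Proof. rewrite !det3 !mxE; ring. Qed.

Lemma pl_Mc (A : 'I_3 -> 'M[C]_6) x phi (u : 'I_3 -> C) (l : 'I_6 -> C) :
  (forall i, symmetric_mx (A i)) -> (forall i, (x^T *m A i *m x) 0 0 = 0) ->
  (forall i q, (x^T *m A i) 0 q = u i * l q) -> forall c k,
  plucker (act (Mc x phi c) A) k = plucker A k + c * (plucker (act (Mc x phi 1) A) k - plucker A k).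
Proof.
move=> Hs Hz HL c k; rewrite /plucker; set s := enum_val k.
have E : forall c, \matrix_(i,j) act (Mc x phi c) A i (s j).1 (s j).2 =
  \matrix_(i,j) (A i (s j).1 (s j).2 + c * (u i * (l (s j).2 * phi 0 (s j).1 + l (s j).1 * phi 0 (s j).2))).
  move=> c'; apply/matrixP => i j; rewrite [LHS]mxE act_Mc // [RHS]mxE !HL; ring.
by rewrite !E det_affine.
Qed.

Lemma pl_scale (t : C) (M : 'M[C]_6) (B : 'I_3 -> 'M[C]_6) k :
  plucker (act (t *: M) B) k = t ^+ 6 * plucker (act M B) k.
Proof.
rewrite /plucker.
have -> : \matrix_(i,j) act (t *: M) B i (enum_val k j).1 (enum_val k j).2 =
   (t ^+ 2) *: \matrix_(i,j) act M B i (enum_val k j).1 (enum_val k j).2.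
  have E : forall i, act (t *: M) B i = t ^+ 2 *: act M B i.
    move=> i; rewrite /act [(_ *: _)^T]linearZ /= -scalemxAl -scalemxAl -scalemxAr.
    by rewrite scalerA expr2.
  by apply/matrixP => i j; rewrite [LHS]mxE E !mxE.
by rewrite detZ -exprM.
Qed.

Lemma act_comp (g h : 'M[C]_6) (B : 'I_3 -> 'M[C]_6) : act (g *m h) B = act h (act g B).
Proof. by apply: functional_extensionality => i; rewrite /act trmx_mul !mulmxA. Qed.

Lemma act1 (B : 'I_3 -> 'M[C]_6) : act 1%:M B = B.
Proof. by apply: functional_extensionality => i; rewrite /act trmx1 mul1mx mulmx1. Qed.

Lemma Mc_mul x phi a b : phi *m x = 1%:M ->
  Mc x phi a *m Mc x phi b = Mc x phi (a + b + a * b).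
Proof.
move=> H; rewrite /Mc mulmxDl mul1mx mulmxDr mulmx1 -scalemxAl -scalemxAr.
rewrite (mulmxA (x *m phi)) -(mulmxA x) H mulmx1 scalerA.
by rewrite !scalerDl -!addrA; congr (_ + _); rewrite addrCA.
Qed.

Lemma det_Mc x phi c : phi *m x = 1%:M -> \det (Mc x phi c) = 1 + c.
Proof.
move=> H; rewrite /Mc scalemxAl det_rank1 -scalemxAr H !mxE /= mulr1n mulr1 //.
Qed.

Definition Lin (g : 'M[C]_6) (v : 'I_pl_dim -> C) (k : 'I_pl_dim) : C :=
  \sum_(f : pl_index)
    (\prod_j (g (f j).1 (enum_val k j).1 * g (f j).2 (enum_val k j).2)) * v (enum_rank f).

Lemma plucker_Lin g B k : plucker (act g B) k = Lin g (plucker B) k.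
Proof. exact: plucker_lin. Qed.

Lemma Lin_lin g (v w : 'I_pl_dim -> C) a b k :
  Lin g (fun k => a * v k + b * w k) k = a * Lin g v k + b * Lin g w k.
Proof.
rewrite /Lin !big_distrr -big_split /=; apply: eq_bigr => f _; ring.
Qed.

Lemma Lin_ext g (v w : 'I_pl_dim -> C) k : (forall k, v k = w k) -> Lin g v k = Lin g w k.
Proof. by move=> H; rewrite /Lin; apply: eq_bigr => f _; rewrite H. Qed.
End S.
Section S.
Variable R : realType.
Local Notation C := (R[i]).
Lemma meval_line (n : nat) (pp : mpoly.mpoly n C) (a b : 'I_n -> C) :
  exists Q : {poly C}, forall t, Q.[t] = mpoly.meval (fun k => a k + t * b k) pp.
Proof.
exists (\sum_(m <- mpoly.msupp pp) (mpoly.mcoeff m pp)%:P * \prod_i ((a i)%:P + b i *: 'X) ^+ (mpoly.fun_of_multinom m i)).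
move=> t; rewrite mpoly.mevalE horner_sum; apply: eq_bigr => m _.
rewrite hornerCM horner_prod; congr (_ * _); apply: eq_bigr => i _.
by rewrite horner_exp hornerD hornerC hornerZ hornerX mulrC.
Qed.
Lemma natC_inj (m n : nat) : (m%:R : C) = n%:R -> m = n.
Proof. by move/eqP; rewrite eqr_nat => /eqP. Qed.
End S.

Theorem lemma3p3 (R : realType) (A : 'I_3 -> 'M[R[i]]_6) :
  stable_net A ->
  forall x : 'cV[R[i]]_6, singular_point A x -> tame A x.
Proof.
move=> [[Hsym _] [[P HP] [s Hs]]] x [[xnz Hz] Hr].
rewrite /tame; case: (eqVneq (\rank (lin_forms A x)) 2%N) => // Hne; exfalso.
have Hr1 : (\rank (lin_forms A x) <= 1)%N.
  move: Hr Hne; case: (\rank _) => [|[|[|k]]] //.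
have [u [l Hul]] := rank1_fact Hr1.
have HL : forall i q, (x^T *m A i) 0 q = u i * l q by move=> i q; rewrite -Hul /lin_forms [RHS]mxE.
have [p Hp] : exists p, x p 0 != 0.
  case: (pickP (fun p => x p 0 != 0)) => [p Hp|H0]; first by exists p.
  case/eqP: xnz; apply/matrixP => a b; rewrite ord1 mxE.
  by have := H0 a; rewrite /= => /negbFE /eqP.
pose phi : 'rV[R[i]]_6 := (x p 0)^-1 *: delta_mx 0 p.
have Hphi : phi *m x = 1%:M.
  apply/matrixP => a b; rewrite !ord1 -scalemxAl !mxE (bigD1 p) //= big1 ?addr0.
    by rewrite !mxE !eqxx mul1r mulVf.
  by move=> j /negbTE njp; rewrite !mxE njp andbF mul0r.
have Hphiq : forall q, q != p -> phi 0 q = 0.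
  by move=> q /negbTE nq; rewrite !mxE nq andbF mulr0.
pose G t := t *: Mc x phi ((t ^+ 6)^-1 - 1).
pose m := plucker A.
pose mu k := plucker (act (Mc x phi 1) A) k - m k.
have HG : forall t, t != 0 -> forall k,
    plucker (act (G t) A) k = t ^+ 6 * m k + (1 - t ^+ 6) * mu k.
  move=> t t0 k; rewrite pl_scale (pl_Mc _ Hsym Hz HL) /mu /m.
  have t6 : t ^+ 6 != 0 by rewrite expf_neq0.
  by field.
have detG : forall t, t != 0 -> \det (G t) = 1.
  by move=> t t0; rewrite detZ det_Mc // addrC subrK mulfV // expf_neq0.
have orbG : forall t, t != 0 -> pl_orbit A (plucker (act (G t) A)).
  by move=> t t0; exists (G t); split => //; exact: detG.
have Hmu : pl_orbit A mu.
  apply/HP => pp Hpp.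
  have [Q HQ] := meval_line pp mu (fun k => m k - mu k).
  have Hroot : forall t, t != 0 -> Q.[t ^+ 6] = 0.
    move=> t t0; rewrite HQ -((proj1 (HP _) (orbG t t0)) pp Hpp).
    by apply: mpoly.meval_eq => k /=; rewrite HG //; ring.
  have Q0 : Q = 0.
    apply: (@roots_geq_poly_eq0 _ Q [seq ((n.+1)%:R : R[i]) ^+ 6 | n <- iota 0 (size Q)]).
    - by apply/allP => z /mapP [n _ ->]; apply/rootP; apply: Hroot; rewrite pnatr_eq0.
    - rewrite map_inj_in_uniq ?iota_uniq // => n1 n2 _ _.
      rewrite -!natrX => /natC_inj /eqP; rewrite eqn_exp2r // => /eqP [] //.
    - by rewrite size_map size_iota.
  have := HQ 0; rewrite Q0 horner0 => /esym E; rewrite -E.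
  by apply: mpoly.meval_eq => k /=; rewrite mul0r addr0.
case: Hmu => g0 [dg0 Hg0].
have GM : forall a b, a != 0 -> b != 0 -> G a *m G b = G (a * b).
  move=> a b a0 b0; rewrite /G -scalemxAl -scalemxAr scalerA Mc_mul //.
  by congr (_ *: Mc _ _ _); field; rewrite b0 a0.
have two0 : (2 : R[i]) != 0 by rewrite pnatr_eq0.
have LG : forall t, t != 0 -> forall k, Lin (G t) mu k = mu k.
  move=> t t0 k.
  have E1 : Lin (G t) (plucker (act (G 2) A)) k = plucker (act (G (2 * t)) A) k.
    by rewrite -plucker_Lin -act_comp GM.
  have E2 : Lin (G t) (plucker (act (G 2) A)) k =
      2 ^+ 6 * Lin (G t) m k + (1 - 2 ^+ 6) * Lin (G t) mu k.
    by rewrite (Lin_ext _ _ (HG 2 two0)) Lin_lin.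
  have E3 : Lin (G t) m k = t ^+ 6 * m k + (1 - t ^+ 6) * mu k by rewrite /m -plucker_Lin HG.
  rewrite E1 E3 HG ?mulf_neq0 // in E2.
  have a1 : (1 - 2 ^+ 6 : R[i]) != 0.
    by rewrite subr_eq0 eq_sym -(natrX _ 2 6) -[1]/(1%:R) eqr_nat.
  apply/eqP; rewrite -subr_eq0; apply/eqP.
  have : (1 - 2 ^+ 6) * (Lin (G t) mu k - mu k) = 0.
    transitivity (2 ^+ 6 * (t ^+ 6 * m k + (1 - t ^+ 6) * mu k) + (1 - 2 ^+ 6) * Lin (G t) mu k
       - ((2 * t) ^+ 6 * m k + (1 - (2 * t) ^+ 6) * mu k)); first by ring.
    by rewrite -E2 subrr.
  by move/eqP; rewrite mulf_eq0 (negbTE a1) /= => /eqP.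
have ug0 : g0 \in unitmx by rewrite unitmxE dg0 unitr1.
pose H t := g0 *m G t *m invmx g0.
have HH : forall t, t != 0 -> H t \in s.
  move=> t t0; apply: Hs.
    by rewrite /H !det_mulmx det_inv dg0 detG // invr1 !mulr1.
  apply: functional_extensionality => k.
  have E : forall k', plucker (act (G t) (act g0 A)) k' = plucker (act g0 A) k'.
    by move=> k'; rewrite plucker_Lin -Hg0 LG.
  by rewrite /H !act_comp plucker_Lin (Lin_ext _ _ E) -plucker_Lin -act_comp mulmxV // act1.
have K : forall t, G t = invmx g0 *m (H t *m g0) by move=> t; rewrite /H mulmxKV // mulKmx.
pose q : 'I_6 := if p == 0 then 1 else 0.
have qp : q != p.
  rewrite /q; case: (eqVneq p 0) => [->|np] //; by rewrite eq_sym.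
have Gq : forall t, G t q q = t.
  move=> t; rewrite /G /Mc !mxE big_ord1 Hphiq // eqxx mulr0 mulr0 addr0 mulr1n mulr1 //.
have Hinj : forall t t', H t = H t' -> t = t'.
  by move=> t t' E; rewrite -(Gq t) K E -K Gq.
have nz : forall n : nat, ((n.+1)%:R : R[i]) != 0 by move=> n; rewrite pnatr_eq0.
have U : uniq [seq H (n.+1)%:R | n <- iota 0 (size s).+1].
  rewrite map_inj_in_uniq ?iota_uniq // => n1 n2 _ _ /Hinj /natC_inj [] //.
have Hsub : {subset [seq H (n.+1)%:R | n <- iota 0 (size s).+1] <= s}.
  by move=> z /mapP [n _ ->]; apply: HH.
by have := uniq_leq_size U Hsub; rewrite size_map size_iota ltnn.
Qed.
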